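(* Let $M$ be a matroid on $S$ and $N$ a matroid on $T$, with $S\cap T=\emptyset$, let $P=M\mathbin{\Box} N$, and let $U\subseteq S\cup T$. Then $$P|U = M|(U\cap S)\ \mathbin{\Box}\ \mathrm{L}^i\big(N|(U\cap T)\big)\qquad\text{and}\qquad P/U=\mathrm{T}^j\big(M/(U\cap S)\big)\ \mathbin{\Box}\ N/(U\cap T),$$ where $i=\lambda_M(U\cap S)$ and $j=\nu_N(U\cap T)$.
   Context: For a matroid $M$ on $S$ write $\rho_M$ for rank, $\rho(M)=\rho_M(S)$, $\nu_M(A)=|A|-\rho_M(A)$, $\lambda_M(A)=\rho(M)-\rho_M(A)$. For matroids $M$ on $S$ and $N$ on $T$ with $S\cap T=\emptyset$, the free product $M\mathbin{\Box} N$ is the matroid on $S\cup T$ whose independent sets are those $A$ with $A\cap S$ independent in $M$ and $\lambda_M(A\cap S)\geq\nu_N(A\cap T)$. The truncation $\mathrm{T}M$ of $M$ is the matroid whose independent sets are the independent sets $A$ of $M$ with $|A|\leq\max\{0,\rho(M)-1\}$; the (Higgs) lift $\mathrm{L}M$ is the matroid whose independent sets are the $A\subseteq S$ with $\nu_M(A)\leq 1$. $\mathrm{T}^i$ and $\mathrm{L}^i$ denote $i$-fold iterates ($\mathrm{T}^0=\mathrm{L}^0=$ identity). $|$ denotes restriction and $/$ contraction. *)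

(* Defs.v *)
From mathcomp Require Import all_boot.
Set Implicit Arguments. Unset Strict Implicit. Unset Printing Implicit Defensive.

Record matroid (E : finType) := Matroid {
  ground : {set E};
  indep : {set {set E}} }.

Section Matroids.
Variable E : finType.
Implicit Types (M N : matroid E) (A B X : {set E}).

Definition is_matroid M : Prop :=
  [/\ set0 \in indep M,
      (forall A, A \in indep M -> A \subset ground M),
      (forall A B, B \in indep M -> A \subset B -> A \in indep M) &
      (forall A B, A \in indep M -> B \in indep M -> #|A| < #|B| ->
         exists2 x, x \in B :\: A & x |: A \in indep M)].

Definition rank M A : nat := \max_(B in indep M | B \subset A) #|B|.
Definition rk M : nat := rank M (ground M).
Definition nullity M A : nat := #|A| - rank M A.
Definition lam M A : nat := rk M - rank M A.

Definition free_product M N : matroid E :=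
  Matroid (ground M :|: ground N)
    [set A : {set E} | [&& A \subset ground M :|: ground N,
                 (A :&: ground M) \in indep M &
                 nullity N (A :&: ground N) <= lam M (A :&: ground M)]].

Definition truncation M : matroid E :=
  Matroid (ground M) [set A : {set E} in indep M | #|A| <= (rk M).-1].

Definition higgs_lift M : matroid E :=
  Matroid (ground M) [set A : {set E} | (A \subset ground M) && (nullity M A <= 1)].

Definition restrict M X : matroid E :=
  Matroid X [set A : {set E} in indep M | A \subset X].

Definition contract M X : matroid E :=
  Matroid (ground M :\: X)
    [set A : {set E} | (A \subset ground M :\: X) && (rank M (A :|: X) == #|A| + rank M X)].

End Matroids.

(* Main.v *)
Require Import Defs.
From mathcomp Require Import all_boot zify.


Section H.
Set Implicit Arguments. Unset Strict Implicit. Unset Printing Implicit Defensive.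
Variable E : finType.
Implicit Types (M N : matroid E) (A B X Y Z : {set E}).

Definition hered M := forall A B, B \in indep M -> A \subset B -> A \in indep M.

Lemma basis_ex M A : set0 \in indep M ->
  exists B, [/\ B \in indep M, B \subset A & #|B| = rank M A].
Proof.
move=> H0; rewrite /rank (bigmax_eq_arg set0) ?H0 ?sub0set //.
case: arg_maxnP => [|B /andP[HB HBA] _]; first by rewrite H0 sub0set.
by exists B.
Qed.

Lemma rank_ge M A B : B \in indep M -> B \subset A -> #|B| <= rank M A.
Proof. by move=> HB HBA; rewrite /rank; apply: (bigmax_sup B) => //; rewrite HB HBA. Qed.

Lemma rank_le M A m : (forall B, B \in indep M -> B \subset A -> #|B| <= m) -> rank M A <= m.
Proof. by move=> H; apply/bigmax_leqP => B /andP[]; apply: H. Qed.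

Lemma rank_card M A : rank M A <= #|A|.
Proof. by apply: rank_le => B _; apply: subset_leq_card. Qed.

Lemma rank_mono M A B : A \subset B -> rank M A <= rank M B.
Proof. by move=> AB; apply: rank_le => C HC CA; apply: rank_ge => //; apply: subset_trans AB. Qed.

Lemma rank_indep M A : A \in indep M -> rank M A = #|A|.
Proof. by move=> HA; apply/eqP; rewrite eqn_leq rank_card rank_ge. Qed.

Lemma indep_rank M A : set0 \in indep M -> (A \in indep M) = (rank M A == #|A|).
Proof.
move=> H0; apply/idP/eqP; first exact: rank_indep.
have [B [HB BA eB]] := basis_ex A H0; rewrite -eB => cBA.
suff eAB : A = B by rewrite eAB.
by apply/eqP; rewrite eq_sym eqEcard BA cBA leqnn.
Qed.

Lemma rank_union M Y Z : hered M -> rank M (Y :|: Z) <= rank M Y + #|Z|.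
Proof.
move=> Hh; apply: rank_le => C HC CYZ.
rewrite -(cardsID Z C).
have : C :\: Z \subset Y.
  apply/subsetP => x; rewrite inE => /andP[xZ xC].
  by move/subsetP: CYZ => /(_ x xC); rewrite inE (negbTE xZ) orbF.
move=> h; have := rank_ge (Hh _ _ HC (subsetDl C Z)) h.
have := subset_leq_card (subsetIr C Z); lia.
Qed.

Lemma subset_card_ex A k : k <= #|A| -> exists2 B : {set E}, B \subset A & #|B| = k.
Proof.
elim: k => [|k IH] hk; first by exists set0; rewrite ?sub0set ?cards0.
have [B BA cB] := IH (ltnW hk).
have : 0 < #|A :\: B| by rewrite cardsDS //; lia.
rewrite card_gt0 => /set0Pn [x]; rewrite inE => /andP[xB xA].
exists (x |: B); first by rewrite subUset sub1set xA BA.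
by rewrite cardsU1 xB cB.
Qed.

Lemma rank_restrict M X A : A \subset X -> rank (restrict M X) A = rank M A.
Proof.
move=> AX; rewrite /rank; apply: eq_bigl => B /=; rewrite inE.
case BA: (B \subset A); rewrite ?andbF ?andbT //=.
by rewrite (subset_trans BA AX) andbT.
Qed.

End H.


Section H2.
Set Implicit Arguments. Unset Strict Implicit. Unset Printing Implicit Defensive.
Variable E : finType.
Implicit Types (M N : matroid E) (A B C X Y Z : {set E}).

Lemma rank_lift M A : set0 \in indep M -> A \subset ground M ->
  rank (higgs_lift M) A = minn #|A| (rank M A).+1.
Proof.
move=> H0 AG; apply/eqP; rewrite eqn_leq; apply/andP; split.
  apply: rank_le => B; rewrite inE => /andP[_ nB] BA.
  have := rank_mono M BA; have := subset_leq_card BA; rewrite /nullity in nB; lia.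
case: (ltnP (rank M A) #|A|) => h.
  have [B [HB BA cB]] := basis_ex A H0.
  have : 0 < #|A :\: B| by rewrite cardsDS //; lia.
  rewrite card_gt0 => /set0Pn [x]; rewrite inE => /andP[xB xA].
  apply: (@leq_trans #|x |: B|); first by rewrite cardsU1 xB cB; lia.
  apply: rank_ge; last by rewrite subUset sub1set xA BA.
  rewrite inE; apply/andP; split.
    by apply: subset_trans AG; rewrite subUset sub1set xA BA.
  rewrite /nullity cardsU1 xB; have := rank_ge HB (subsetUr [set x] B); lia.
apply: leq_trans (geq_minl _ _) _; apply: rank_ge => //.
rewrite inE AG /nullity; have := rank_card M A; lia.
Qed.

Lemma iter_lift M i : set0 \in indep M ->
  [/\ ground (iter i (@higgs_lift E) M) = ground M,
      set0 \in indep (iter i (@higgs_lift E) M) &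
      forall A, A \subset ground M ->
        nullity (iter i (@higgs_lift E) M) A = nullity M A - i].
Proof.
move=> H0; elim: i => [|i [IHg IH0 IHn]] /=; first by split => // A _; rewrite subn0.
split => //.
  by rewrite inE sub0set /nullity cards0.
move=> A AG; rewrite /nullity rank_lift //; last by rewrite IHg.
have := IHn A AG; rewrite /nullity; have := rank_card (iter i (@higgs_lift E) M) A.
lia.
Qed.

Lemma rank_trunc M A : set0 \in indep M -> hered M ->
  rank (truncation M) A = minn (rank M A) (rk M).-1.
Proof.
move=> H0 Hh; apply/eqP; rewrite eqn_leq; apply/andP; split.
  apply: rank_le => B; rewrite inE => /andP[HB cB] BA.
  have := rank_ge HB BA; lia.
have [B [HB BA cB]] := basis_ex A H0.
have [C CB cC] := @subset_card_ex _ B (minn (rank M A) (rk M).-1) ltac:(lia).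
rewrite -cC; apply: rank_ge; last exact: subset_trans CB BA.
by rewrite inE (Hh _ _ HB CB) cC geq_minr.
Qed.

Lemma hered_trunc M : hered M -> hered (truncation M).
Proof.
move=> Hh A B; rewrite !inE => /andP[HB cB] AB.
by rewrite (Hh _ _ HB AB) (leq_trans (subset_leq_card AB) cB).
Qed.

Lemma iter_trunc M j : set0 \in indep M -> hered M ->
  [/\ ground (iter j (@truncation E) M) = ground M,
      set0 \in indep (iter j (@truncation E) M),
      hered (iter j (@truncation E) M) &
      forall A, A \subset ground M ->
        rank (iter j (@truncation E) M) A = minn (rank M A) (rk M - j)].
Proof.
move=> H0 Hh; elim: j => [|j [IHg IH0 IHh IHr]] /=.
  by split => // A AG; rewrite subn0; have := rank_mono M AG; rewrite /rk; lia.
split => //.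
- by rewrite inE IH0 cards0.
- exact: hered_trunc.
move=> A AG; rewrite rank_trunc // /rk IHg !IHr //; rewrite /rk; lia.
Qed.

Lemma augment M : is_matroid M -> forall n I K, I \in indep M -> K \in indep M ->
  #|K| - #|I| = n -> #|I| <= #|K| ->
  exists J, [/\ J \in indep M, I \subset J, J \subset I :|: K & #|J| = #|K|].
Proof.
case=> _ _ _ Haug; elim=> [|n IH] I K HI HK hn hle.
  exists I; split => //; [exact: subsetUl | lia].
have [|x xKI HxI] := Haug I K HI HK; first lia.
move: xKI; rewrite inE => /andP[xI xK].
have e1 : #|K| - #|x |: I| = n by rewrite cardsU1 xI; lia.
have e2 : #|x |: I| <= #|K| by rewrite cardsU1 xI; lia.
have [J [HJ xIJ JxIK cJ]] := IH (x |: I) K HxI HK e1 e2.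
exists J; split => //.
  by apply: subset_trans xIJ; apply: subsetUr.
apply: subset_trans JxIK _; rewrite !subUset sub1set !inE xK orbT subsetUl subsetUr.
by [].
Qed.

Lemma matroid_hered M : is_matroid M -> hered M.
Proof. by case=> _ _ H _. Qed.

Lemma matroid_set0 M : is_matroid M -> set0 \in indep M.
Proof. by case. Qed.

Lemma rank_contract M X A : is_matroid M -> A \subset ground M :\: X ->
  rank (contract M X) A = rank M (A :|: X) - rank M X.
Proof.
move=> HM AG; have H0 := matroid_set0 HM; have Hh := matroid_hered HM.
apply/eqP; rewrite eqn_leq; apply/andP; split.
  apply: rank_le => B; rewrite inE => /andP[_ /eqP e] BA.
  have := rank_mono M (setSU X BA); lia.
have [I [HI IX cI]] := basis_ex X H0.
have [K [HK KAX cK]] := basis_ex (A :|: X) H0.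
have hIK : #|I| <= #|K| by rewrite cI cK; apply: rank_mono; apply: subsetUr.
have [J [HJ IJ JIK cJ]] := augment HM HI HK (erefl _) hIK.
have JX : #|J :&: X| <= rank M X by apply: rank_ge (Hh _ _ HJ (subsetIl J X)) (subsetIr J X).
have IJX : #|I| <= #|J :&: X| by apply: subset_leq_card; rewrite subsetI IJ IX.
have cB : #|J :\: X| = #|J| - #|J :&: X| by rewrite cardsD.
have BA : J :\: X \subset A.
  apply/subsetP => x; rewrite inE => /andP[xX xJ].
  move/subsetP: JIK => /(_ x xJ); rewrite inE => /orP[/(subsetP IX)|/(subsetP KAX)].
    by rewrite (negbTE xX).
  by rewrite inE (negbTE xX) orbF.
have JBX : J \subset (J :\: X) :|: X.
  by apply/subsetP => x xJ; rewrite !inE xJ; case: (x \in X).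
have := rank_ge HJ JBX; have := rank_union (J :\: X) X Hh.
have := cardsID X J => hID.
rewrite setUC in JBX *; have := rank_union X (J :\: X) Hh => h1 h2 h3.
apply: (@leq_trans #|J :\: X|); first lia.
apply: rank_ge => //; rewrite inE (subset_trans BA AG) /=.
apply/eqP; rewrite setUC; lia.
Qed.

Lemma contract_set0 M X : set0 \in indep (contract M X).
Proof. by rewrite /contract /= inE sub0set set0U cards0 add0n eqxx. Qed.

Lemma hered_contract M X : is_matroid M -> hered (contract M X).
Proof.
move=> HM; have Hh := matroid_hered HM.
move=> A B; rewrite !inE => /andP[BG /eqP e] AB.
rewrite (subset_trans AB BG) /=.
have h1 := rank_union (A :|: X) (B :\: A) Hh.
have h2 : rank M (B :|: X) <= rank M ((A :|: X) :|: (B :\: A)).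
  apply: rank_mono; apply/subsetP => x; rewrite !inE.
  by case: (x \in A); case: (x \in B); case: (x \in X).
have h3 := rank_union X A Hh.
have h4 := cardsDS AB.
have h5 := subset_leq_card AB.
rewrite setUC in h3; apply/eqP; lia.
Qed.

Lemma card_split S T B : B \subset S :|: T -> [disjoint S & T] ->
  #|B| = #|B :&: S| + #|B :&: T|.
Proof.
move=> BST dST; rewrite -(cardsID S B); congr (_ + _).
apply: eq_card => x; rewrite !inE.
case xB: (x \in B) => //=; rewrite ?andbF //.
move/subsetP: BST => /(_ x xB); rewrite inE.
have := disjoint_setI0 dST => /setP /(_ x); rewrite !inE.
by case: (x \in S); case: (x \in T).
Qed.

End H2.


Section H3.
Set Implicit Arguments. Unset Strict Implicit. Unset Printing Implicit Defensive.
Variable E : finType.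
Implicit Types (M N : matroid E) (A B C X Y Z S T : {set E}).

Lemma setI0_sub A S T : A \subset T -> [disjoint S & T] -> A :&: S = set0.
Proof.
move=> AT dST; apply/eqP; rewrite setI_eq0; apply: disjointWl AT _.
by rewrite disjoint_sym.
Qed.

Lemma rank_fp M N X : set0 \in indep M -> set0 \in indep N ->
  [disjoint ground M & ground N] ->
  rank (free_product M N) X = rank M (X :&: ground M) + rank N (X :&: ground N)
     + minn (nullity N (X :&: ground N)) (lam M (X :&: ground M)).
Proof.
move=> H0M H0N dST.
apply/eqP; rewrite eqn_leq; apply/andP; split.
  apply: rank_le => B; rewrite /free_product /= inE => /and3P[BST BS nB] BX.
  have cB := card_split BST dST.
  have r1 := rank_indep BS.
  have r2 := rank_ge BS (setSI (ground M) BX).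
  have r3 := rank_mono N (setSI (ground N) BX).
  have r4 := subset_leq_card (setSI (ground N) BX).
  have r5 := rank_card N (B :&: ground N).
  have r6 := rank_card N (X :&: ground N).
  have r7 : rank M (X :&: ground M) <= rk M := rank_mono M (subsetIr X _).
  move: nB; rewrite /nullity /lam r1 => nB; rewrite /nullity /lam; lia.
have [BS [HBS BSX cBS]] := basis_ex (X :&: ground M) H0M.
have [BT [HBT BTX cBT]] := basis_ex (X :&: ground N) H0N.
set k := minn (nullity N (X :&: ground N)) (lam M (X :&: ground M)).
have hk : k <= #|(X :&: ground N) :\: BT|.
  by rewrite cardsDS // cBT /k /nullity geq_minl.
have [C CD cC] := subset_card_ex hk.
have BSS : BS \subset ground M := subset_trans BSX (subsetIr _ _).
have BTT : BT \subset ground N := subset_trans BTX (subsetIr _ _).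
have CT : C \subset ground N.
  by apply: subset_trans CD _; apply: subset_trans (subsetDl _ _) (subsetIr _ _).
have CX : C \subset X.
  by apply: subset_trans CD _; apply: subset_trans (subsetDl _ _) (subsetIl _ _).
have dTS : [disjoint ground N & ground M] by rewrite disjoint_sym.
have e1 : (BS :|: (BT :|: C)) :&: ground M = BS.
  by rewrite !setIUl (setIidPl BSS) (setI0_sub BTT dST) (setI0_sub CT dST) !setU0.
have e2 : (BS :|: (BT :|: C)) :&: ground N = BT :|: C.
  have h : BT :|: C \subset ground N by rewrite subUset BTT CT.
  by rewrite setIUl (setIidPl h) (setI0_sub BSS dTS) set0U.
have e3 : BT :&: C = set0.
  apply/setP => x; rewrite !inE; case xC: (x \in C); rewrite ?andbF //.
  by have := subsetP CD x xC; rewrite !inE => /andP[/negbTE -> _].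
have cTC : #|BT :|: C| = #|BT| + #|C| by rewrite -cardsUI e3 cards0 addn0.
have BST : BS :|: (BT :|: C) \subset ground M :|: ground N.
  rewrite !subUset; apply/and3P; split.
  - exact: subset_trans BSS (subsetUl _ _).
  - exact: subset_trans BTT (subsetUr _ _).
  - exact: subset_trans CT (subsetUr _ _).
have cB := card_split BST dST; rewrite e1 e2 cTC in cB.
apply: (@leq_trans #|BS :|: (BT :|: C)|); last first.
  apply: rank_ge.
    rewrite /free_product /= inE BST e1 e2 HBS /=.
    rewrite /nullity /lam (rank_indep HBS) cTC.
    have h1 := rank_ge HBT (subsetUl BT C).
    have h2 : #|C| <= rk M - #|BS| by rewrite cC cBS; exact: geq_minr.
    move: h1 h2; move: #|BT| #|C| (rank N (BT :|: C)) (rk M - #|BS|) => a b c d.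
    clear; lia.
  rewrite !subUset CX (subset_trans BSX (subsetIl _ _)) (subset_trans BTX (subsetIl _ _)).
  by [].
by rewrite cB cBS cBT -/k cC addnA.
Qed.

Lemma matroid_eq (M1 M2 : matroid E) :
  ground M1 = ground M2 -> indep M1 =i indep M2 -> M1 = M2.
Proof. by case: M1 M2 => g1 i1 [g2 i2] /= -> /setP ->. Qed.

End H3.


Theorem proposition5p2 (E : finType) (M N : matroid E) (U : {set E}) :
  is_matroid M -> is_matroid N ->
  [disjoint ground M & ground N] ->
  U \subset ground M :|: ground N ->
  let P := free_product M N in
  let i := lam M (U :&: ground M) in
  let j := nullity N (U :&: ground N) in
  restrict P U =
    free_product (restrict M (U :&: ground M))
                 (iter i (@higgs_lift E) (restrict N (U :&: ground N)))
  /\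
  contract P U =
    free_product (iter j (@truncation E) (contract M (U :&: ground M)))
                 (contract N (U :&: ground N)).
Proof.
move=> HM HN dST UST P i j.
have H0M := matroid_set0 HM; have H0N := matroid_set0 HN.
have HhM := matroid_hered HM; have HhN := matroid_hered HN.
have H0NU : set0 \in indep (restrict N (U :&: ground N)).
  by rewrite /restrict /= inE H0N sub0set.
have [Lg L0 Ln] := iter_lift i H0NU.
split.
  apply: matroid_eq.
    rewrite /free_product /= Lg /= -setIUr; apply/esym/setIidPl => //.
  set RN := restrict N (U :&: ground N) in Lg L0 Ln *.
  set RM := restrict M (U :&: ground M).
  have gRM : ground RM = U :&: ground M by [].
  have gRN : ground RN = U :&: ground N by [].
  move=> A; rewrite [restrict P U]/restrict /P /free_product /= !inE Lg gRN.
  case: (boolP (A \subset U)) => AU; last first.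
    rewrite andbF; apply/esym/negbTE; rewrite negb_and -setIUr subsetI.
    by rewrite (negbTE AU).
  have eS : A :&: (U :&: ground M) = A :&: ground M by rewrite setIA (setIidPl AU).
  have eT : A :&: (U :&: ground N) = A :&: ground N by rewrite setIA (setIidPl AU).
  rewrite eS eT Ln; last by rewrite gRN setSI.
  rewrite -setIUr subsetI AU (subset_trans AU UST) setSI // !andbT /=.
  rewrite /nullity rank_restrict ?setSI // /lam /rk gRM !rank_restrict ?setSI //.
  rewrite /i /lam /rk.
  have h1 := rank_mono M (setSI (ground M) AU).
  have h2 := rank_mono M (subsetIr U (ground M)).
  case: (_ \in indep M) => //=.
  move: h1 h2; move: (rank M (A :&: ground M)) (rank M (U :&: ground M)) (rank M (ground M)) 
     (#|A :&: ground N| - rank N (A :&: ground N)) => a b c d.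
  by move=> h1 h2; apply/idP/idP; clear -h1 h2; lia.
have HhM' := @hered_contract E M (U :&: ground M) HM.
have H0M' := @contract_set0 E M (U :&: ground M).
have [Tg T0 Th Tr] := iter_trunc j H0M' HhM'.
have gE : (ground M :|: ground N) :\: U =
    ground M :\: U :&: ground M :|: ground N :\: U :&: ground N.
  apply/setP => x; rewrite !inE.
  by case: (x \in U); case: (x \in ground M); case: (x \in ground N).
apply: matroid_eq; first by rewrite /= Tg.
move=> A; rewrite [contract P U]/contract /= inE /P !rank_fp //.
rewrite /free_product /= inE Tg /= -gE.
case: (boolP (A \subset (ground M :|: ground N) :\: U)) => AG; last by [].
have AU x : x \in A -> x \notin U.
  by move=> xA; move/subsetP: AG => /(_ x xA); rewrite inE => /andP[].
have eS : A :&: (ground M :\: U :&: ground M) = A :&: ground M.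
  apply/setP => x; rewrite !inE; case xA: (x \in A) => //=.
  by rewrite (negbTE (AU x xA)).
have eT : A :&: (ground N :\: U :&: ground N) = A :&: ground N.
  apply/setP => x; rewrite !inE; case xA: (x \in A) => //=.
  by rewrite (negbTE (AU x xA)).
rewrite eS eT /=.
have AS' : A :&: ground M \subset ground (contract M (U :&: ground M)).
  by rewrite /= -eS subsetIr.
have AT' : A :&: ground N \subset ground N :\: (U :&: ground N).
  by rewrite -eT subsetIr.
have gM' : ground (contract M (U :&: ground M)) \subset ground M :\: (U :&: ground M) by [].
have eSS : (ground M :\: U :&: ground M) :|: (U :&: ground M) = ground M.
  apply/setP => x; rewrite !inE; by case: (x \in U); case: (x \in ground M).
have dAU : (A :&: ground N) :&: (U :&: ground N) = set0.
  apply/setP => x; rewrite !inE; case xA: (x \in A) => //=.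
  by rewrite (negbTE (AU x xA)) andbF.
have cAU : #|(A :&: ground N) :|: (U :&: ground N)| = #|A :&: ground N| + #|U :&: ground N|.
  by rewrite -cardsUI dAU cards0 addn0.
have ASTG : A \subset ground M :|: ground N by apply: subset_trans AG (subsetDl _ _).
rewrite (indep_rank _ T0) /lam /rk Tg !Tr // (rank_contract HM AS') (rank_contract HM gM') eSS.
rewrite /nullity (rank_contract HN AT') !setIUl cAU (card_split ASTG dST).
rewrite /rk (rank_contract HM gM') eSS /j /nullity.
have h1 := rank_mono M (subsetUr (A :&: ground M) (U :&: ground M)).
have h2 : rank M ((A :&: ground M) :|: (U :&: ground M)) <= rank M (ground M).
  by apply: rank_mono; rewrite subUset !subsetIr.
have h3 := rank_union (U :&: ground M) (A :&: ground M) HhM.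
rewrite setUC in h3.
have h4 := rank_card N (U :&: ground N).
have h5 := rank_mono N (subsetUr (A :&: ground N) (U :&: ground N)).
have h6 := rank_union (U :&: ground N) (A :&: ground N) HhN.
rewrite setUC in h6.
move: h1 h2 h3 h4 h5 h6.
move: #|A :&: ground M| #|A :&: ground N| #|U :&: ground N| (rank M (ground M))
  (rank M (U :&: ground M)) (rank M ((A :&: ground M) :|: (U :&: ground M)))
  (rank N (U :&: ground N)) (rank N ((A :&: ground N) :|: (U :&: ground N))).
move=> a b ut R u rS rN rT h1 h2 h3 h4 h5 h6.
apply/idP/idP.
  move/eqP => H; apply/andP; split; [apply/eqP|]; clear -h1 h2 h3 h4 h5 h6 H; lia.
move/andP => [/eqP H1 H2]; apply/eqP; clear -h1 h2 h3 h4 h5 h6 H1 H2; lia.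
Qed.
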